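(* Let $(X,d)$ be a compact metric space, $f\colon X\to X$ a continuous map, and $S\subset X$ a compact subset with $f(S)\subset S$ and $CR(f|_S)=S$. If $f$ has the limit shadowing property around $S$, then $f$ has the shadowing property around $S$.
   Context: For $S\subset X$: $f$ has the shadowing property around $S$ if for every $\epsilon>0$ there is $\delta>0$ such that every $\delta$-pseudo orbit of $f$ (a sequence $(x_i)_{i\ge0}$ with $d(f(x_i),x_{i+1})\le\delta$ for all $i$) contained in $S$ is $\epsilon$-shadowed by some point $x\in X$ (i.e. $d(x_i,f^i(x))\le\epsilon$ for all $i$); $f$ has the limit shadowing property around $S$ if every limit pseudo orbit (sequence with $\lim_i d(f(x_i),x_{i+1})=0$) contained in $S$ admits $y\in X$ with $\lim_i d(x_i,f^i(y))=0$. $CR(g)$ denotes the set of chain recurrent points of $g$: $x$ such that for every $\delta>0$ there is a finite sequence $x=x_0,x_1,\dots,x_k=x$ ($k\ge1$) with $d(g(x_i),x_{i+1})\le\delta$ for $0\le i<k$. *)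

(* Defs.v *)
From Stdlib Require Import Reals.
Open Scope R_scope.

Record MetricSpace := {
  Mcar :> Type;
  dist : Mcar -> Mcar -> R;
  dist_nonneg : forall x y, 0 <= dist x y;
  dist_eq0 : forall x y, dist x y = 0 <-> x = y;
  dist_sym : forall x y, dist x y = dist y x;
  dist_tri : forall x y z, dist x z <= dist x y + dist y z
}.

Section Notions.
Variable X : MetricSpace.

Definition open_set (U : X -> Prop) : Prop :=
  forall x, U x -> exists r, 0 < r /\ forall y, dist X x y < r -> U y.

Definition compact_set (K : X -> Prop) : Prop :=
  forall (I : Type) (U : I -> X -> Prop),
    (forall i, open_set (U i)) ->
    (forall x, K x -> exists i, U i x) ->
    exists l : list I, forall x, K x -> exists i, List.In i l /\ U i x.

Definition compact_space : Prop := compact_set (fun _ => True).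

Definition continuous_map (f : X -> X) : Prop :=
  forall x eps, 0 < eps -> exists delta, 0 < delta /\
    forall y, dist X x y < delta -> dist X (f x) (f y) < eps.

Definition pseudo_orbit (f : X -> X) (delta : R) (xs : nat -> X) : Prop :=
  forall i, dist X (f (xs i)) (xs (S i)) <= delta.

Definition limit_pseudo_orbit (f : X -> X) (xs : nat -> X) : Prop :=
  Un_cv (fun i => dist X (f (xs i)) (xs (S i))) 0.

Definition contained_in (A : X -> Prop) (xs : nat -> X) : Prop :=
  forall i, A (xs i).

Definition shadowing_around (f : X -> X) (A : X -> Prop) : Prop :=
  forall eps, 0 < eps -> exists delta, 0 < delta /\
    forall xs, pseudo_orbit f delta xs -> contained_in A xs ->
      exists x : X, forall i, dist X (xs i) (Nat.iter i f x) <= eps.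

Definition limit_shadowing_around (f : X -> X) (A : X -> Prop) : Prop :=
  forall xs, limit_pseudo_orbit f xs -> contained_in A xs ->
    exists y : X, Un_cv (fun i => dist X (xs i) (Nat.iter i f y)) 0.

Definition chain_recurrent_restr (f : X -> X) (A : X -> Prop) (x : X) : Prop :=
  A x /\
  forall delta, 0 < delta -> exists (k : nat) (c : nat -> X),
    (1 <= k)%nat /\ c 0%nat = x /\ c k = x /\
    (forall i, (i <= k)%nat -> A (c i)) /\
    (forall i, (i < k)%nat -> dist X (f (c i)) (c (S i)) <= delta).

End Notions.

(* Main.v *)
Require Import Defs.
From Stdlib Require Import Reals Lra Lia Classical IndefiniteDescription List.
Import Defs.
Open Scope R_scope.

Lemma my_choice {A B : Type} (P : A -> B -> Prop) :
  (forall a, exists b, P a b) -> exists g : A -> B, forall a, P a (g a).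
Proof.
  intros H. exists (fun a => proj1_sig (constructive_indefinite_description _ (H a))).
  intro a. exact (proj2_sig (constructive_indefinite_description _ (H a))).
Qed.

Lemma dist_self (X : MetricSpace) (x : X) : dist X x x = 0.
Proof. apply (proj2 (dist_eq0 X x x)). reflexivity. Qed.

Lemma list_min {T : Type} (l : list T) (r : T -> R) :
  (forall j, In j l -> 0 < r j) -> exists m, 0 < m /\ forall j, In j l -> m <= r j.
Proof.
  induction l as [|a l IH]; intros H.
  - exists 1. split; [lra|]. intros j [].
  - destruct IH as [m [Hm Hj]]. { intros j Hj. apply H. right; exact Hj. }
    exists (Rmin (r a) m). split.
    + apply Rmin_glb_lt; [apply H; left; reflexivity | exact Hm].
    + intros j [<-|Hj']. apply Rmin_l. eapply Rle_trans; [apply Rmin_r| apply Hj; exact Hj'].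
Qed.

Lemma list_maxN {T : Type} (l : list T) (P : T -> nat -> Prop) :
  (forall j, In j l -> exists N, forall n, (N <= n)%nat -> P j n) ->
  exists N, forall j, In j l -> forall n, (N <= n)%nat -> P j n.
Proof.
  induction l as [|a l IH]; intros H.
  - exists 0%nat. intros j [].
  - destruct IH as [N HN]. { intros j Hj. apply H. right; exact Hj. }
    destruct (H a (or_introl eq_refl)) as [Na HNa].
    exists (Nat.max N Na). intros j [<-|Hj] n Hn.
    + apply HNa. lia.
    + apply HN; [exact Hj| lia].
Qed.

Lemma unif_cont (X : MetricSpace) (f : X -> X) :
  compact_space X -> continuous_map X f ->
  forall e, 0 < e -> exists d, 0 < d /\ forall u v, dist X u v < d -> dist X (f u) (f v) < e.
Proof.
  intros HC Hf e He.
  set (I := {x : X & {r : R | 0 < r /\ forall y, dist X x y < 2*r -> dist X (f x) (f y) < e/2}}).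
  set (U := fun (j:I) (y:X) => dist X (projT1 j) y < proj1_sig (projT2 j)).
  destruct (HC I U) as [l Hl].
  - intros [x [r [Hr Hx]]] y Hy. unfold U in *; simpl in *.
    exists (r - dist X x y). split; [lra|]. intros z Hz.
    pose proof (dist_tri X x y z). lra.
  - intros x _. destruct (Hf x (e/2)) as [dl [Hdl H]]; [lra|].
    assert (Hp : 0 < dl/2 /\ forall y, dist X x y < 2*(dl/2) -> dist X (f x) (f y) < e/2).
    { split; [lra|]. intros y Hy. apply H. lra. }
    exists (existT _ x (exist _ (dl/2) Hp)). unfold U; simpl. rewrite dist_self. lra.
  - destruct (list_min l (fun j => proj1_sig (projT2 j))) as [m [Hm Hml]].
    { intros [x [r [Hr Hx]]] _. simpl. exact Hr. }
    exists m. split; [exact Hm|]. intros u v Huv.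
    destruct (Hl u Logic.I) as [[x [r [Hr Hx]]] [Hj Hu]].
    pose proof (Hml _ Hj) as Hmr. unfold U in Hu; simpl in *.
    pose proof (Hx u ltac:(lra)) as H1.
    pose proof (dist_tri X x u v).
    pose proof (Hx v ltac:(lra)) as H2.
    pose proof (dist_tri X (f u) (f x) (f v)). rewrite (dist_sym X (f u) (f x)) in *. lra.
Qed.

Lemma cluster (X : MetricSpace) (K : X -> Prop) (u : nat -> X) :
  compact_set X K -> (forall n, K (u n)) ->
  exists p, K p /\ forall r, 0 < r -> forall N, exists n, (N <= n)%nat /\ dist X p (u n) < r.
Proof.
  intros HC Hu. apply NNPP; intro Hno.
  assert (H: forall p, K p -> exists r, 0 < r /\ exists N, forall n, (N <= n)%nat -> r <= dist X p (u n)).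
  { intros p Kp. apply NNPP; intro H1. apply Hno. exists p. split; auto.
    intros r Hr N. apply NNPP; intro H2. apply H1. exists r. split; auto. exists N.
    intros n Hn. apply Rnot_lt_le. intro H3. apply H2. exists n; auto. }
  set (I := {x : X & {r : R | 0 < r /\ exists N, forall n, (N <= n)%nat -> r <= dist X x (u n)}}).
  set (U := fun (j:I) (y:X) => dist X (projT1 j) y < proj1_sig (projT2 j)).
  destruct (HC I U) as [l Hl].
  - intros [x [r [Hr Hx]]] y Hy. unfold U in *; simpl in *.
    exists (r - dist X x y). split; [lra|]. intros z Hz.
    pose proof (dist_tri X x y z). lra.
  - intros x Kx. destruct (H x Kx) as [r Hr].
    exists (existT _ x (exist _ r Hr)). unfold U; simpl. rewrite dist_self. lra.
  - destruct (list_maxN l (fun j n => proj1_sig (projT2 j) <= dist X (projT1 j) (u n))) as [N HN].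
    { intros [x [r [Hr Hx]]] _. simpl. exact Hx. }
    destruct (Hl (u N) (Hu N)) as [j [Hj Hj2]].
    pose proof (HN j Hj N (le_n _)). unfold U in Hj2. lra.
Qed.

Lemma iter_cont (X : MetricSpace) (f : X -> X) :
  continuous_map X f -> forall i, continuous_map X (Nat.iter i f).
Proof.
  intros Hf i. induction i as [|i IH]; intros x eps He.
  - exists eps. split; auto.
  - destruct (Hf (Nat.iter i f x) eps He) as [d1 [Hd1 H1]].
    destruct (IH x d1 Hd1) as [d2 [Hd2 H2]].
    exists d2. split; auto. intros y Hy. simpl. apply H1. apply H2. exact Hy.
Qed.

Lemma finite_bad (X : MetricSpace) (f : X -> X) (xs : nat -> X) eps :
  compact_space X -> continuous_map X f ->
  (forall x, exists i, eps < dist X (xs i) (Nat.iter i f x)) ->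
  exists N, forall x, exists i, (i <= N)%nat /\ eps < dist X (xs i) (Nat.iter i f x).
Proof.
  intros HC Hf Hb. apply NNPP; intro Hn.
  assert (H0 : forall N, exists y, forall i, (i <= N)%nat -> dist X (xs i) (Nat.iter i f y) <= eps).
  { intro N; apply NNPP; intro H1; apply Hn; exists N; intro x; apply NNPP; intro H2; apply H1;
    exists x; intros i Hi; apply Rnot_lt_le; intro H3; apply H2; exists i; auto. }
  destruct (my_choice _ H0) as [y Hy].
  destruct (cluster X (fun _ => True) y HC (fun _ => I)) as [p [_ Hp]].
  destruct (Hb p) as [i Hi].
  set (g := dist X (xs i) (Nat.iter i f p) - eps).
  destruct (iter_cont X f Hf i p (g/2)) as [dl [Hdl Hc]]. { unfold g; lra. }
  destruct (Hp dl Hdl i) as [n [Hn1 Hn2]].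
  pose proof (Hc _ Hn2) as H3. pose proof (Hy n i Hn1) as H4.
  pose proof (dist_tri X (xs i) (Nat.iter i f (y n)) (Nat.iter i f p)).
  rewrite (dist_sym X (Nat.iter i f (y n)) (Nat.iter i f p)) in *. unfold g in *. lra.
Qed.
Definition ChainF (X : MetricSpace) (f : X -> X) (A : X -> Prop) (sg : R) (k : nat) (c : nat -> X) (a b : X) :=
  c 0%nat = a /\ c k = b /\ (forall i, (i <= k)%nat -> A (c i)) /\
  (forall i, (i < k)%nat -> dist X (f (c i)) (c (S i)) <= sg).

Definition Chain X f A sg a b := exists k c, ChainF X f A sg k c a b.

Definition cat {T : Type} (k1 : nat) (c1 c2 : nat -> T) (i : nat) :=
  if Nat.leb i k1 then c1 i else c2 (i - k1)%nat.

Lemma ChainF_cat X f A sg k1 k2 c1 c2 a b d :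
  ChainF X f A sg k1 c1 a b -> ChainF X f A sg k2 c2 b d ->
  ChainF X f A sg (k1 + k2) (cat k1 c1 c2) a d.
Proof.
  intros [H0 [H1 [H2 H3]]] [G0 [G1 [G2 G3]]]. unfold cat. repeat split.
  - exact H0.
  - destruct (Nat.leb_spec (k1 + k2) k1).
    + assert (k2 = 0%nat) by lia. subst k2. rewrite Nat.add_0_r, H1, <- G1. symmetry; exact G0.
    + replace (k1 + k2 - k1)%nat with k2 by lia. exact G1.
  - intros i Hi. destruct (Nat.leb_spec i k1).
    + apply H2; lia.
    + apply G2; lia.
  - intros i Hi. destruct (Nat.leb_spec i k1); destruct (Nat.leb_spec (S i) k1).
    + apply H3; lia.
    + assert (i = k1) by lia. subst i. rewrite H1, <- G0.
      replace (S k1 - k1)%nat with 1%nat by lia. apply G3; lia.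
    + lia.
    + replace (S i - k1)%nat with (S (i - k1)) by lia. apply G3; lia.
Qed.

Lemma Chain_trans X f A sg a b d :
  Chain X f A sg a b -> Chain X f A sg b d -> Chain X f A sg a d.
Proof.
  intros [k1 [c1 H1]] [k2 [c2 H2]]. exists (k1+k2)%nat, (cat k1 c1 c2).
  eapply ChainF_cat; eauto.
Qed.

Lemma Chain_refl X f A sg a : A a -> Chain X f A sg a a.
Proof.
  intros Ha. exists 0%nat, (fun _ => a). repeat split; auto. intros i Hi; lia.
Qed.

Lemma Chain_mono X f A sg sg' a b : sg <= sg' -> Chain X f A sg a b -> Chain X f A sg' a b.
Proof.
  intros Hs [k [c [H0 [H1 [H2 H3]]]]]. exists k, c. repeat split; auto.
  intros i Hi. eapply Rle_trans; [apply H3; exact Hi| exact Hs].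
Qed.

Lemma Chain_near X f A sg a q :
  (forall x, A x -> chain_recurrent_restr X f A x) -> A q -> A a -> 0 < sg ->
  dist X a q <= sg/2 -> Chain X f A sg a q.
Proof.
  intros Hcr Hq Ha Hs Hd.
  destruct (Hcr a Ha) as [_ Hl]. destruct (Hl (sg/2)) as [k [c [Hk [H0 [H1 [H2 H3]]]]]]; [lra|].
  exists k, (fun i => if Nat.eqb i k then q else c i). repeat split.
  - destruct (Nat.eqb_spec 0 k); [lia| exact H0].
  - rewrite Nat.eqb_refl. reflexivity.
  - intros i Hi. destruct (Nat.eqb_spec i k); auto.
  - intros i Hi. destruct (Nat.eqb_spec i k); [lia|]. destruct (Nat.eqb_spec (S i) k).
    + pose proof (H3 i Hi). rewrite e, H1 in H. pose proof (dist_tri X (f (c i)) a q). lra.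
    + pose proof (H3 i Hi). lra.
Qed.

Lemma Chain_back X f A sg eta x y :
  (forall x, A x -> chain_recurrent_restr X f A x) -> A x -> A y -> 0 < eta -> eta <= sg/2 ->
  (forall u v, dist X u v <= 2*eta -> dist X (f u) (f v) <= sg/2) ->
  dist X (f x) y <= eta -> Chain X f A sg y x.
Proof.
  intros Hcr Hx Hy He Hes Huc Hd.
  destruct (Hcr x Hx) as [_ Hl]. destruct (Hl eta He) as [k0 [c0 [Hk0 HC0]]].
  pose proof (ChainF_cat X f A eta k0 k0 c0 c0 x x x HC0 HC0) as HC.
  set (k := (k0 + k0)%nat) in *. set (c := cat k0 c0 c0) in *. assert (Hk2 : (2 <= k)%nat) by (unfold k; lia). clearbody k c.
  destruct HC as [H0 [H1 [H2 H3]]].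
  exists (k - 1)%nat, (fun i => if Nat.eqb i 0 then y else c (S i)). repeat split.
  - cbv beta. destruct (Nat.eqb_spec (k-1) 0); [lia|]. replace (S (k-1)) with k by lia. exact H1.
  - intros i Hi. destruct (Nat.eqb_spec i 0); auto. apply H2; lia.
  - intros i Hi. destruct (Nat.eqb_spec i 0); destruct (Nat.eqb_spec (S i) 0); try lia.
    + subst i. pose proof (H3 0%nat ltac:(lia)) as G0. pose proof (H3 1%nat ltac:(lia)) as G1.
      rewrite H0 in G0.
      pose proof (dist_tri X y (f x) (c 1%nat)). rewrite (dist_sym X y (f x)) in H.
      pose proof (Huc y (c 1%nat) ltac:(lra)).
      pose proof (dist_tri X (f y) (f (c 1%nat)) (c 2%nat)). lra.
    + pose proof (H3 (S i) ltac:(lia)). lra.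
Qed.

Lemma Chain_rev (X : MetricSpace) (f : X -> X) A sg eta (xs : nat -> X) :
  (forall x, A x -> chain_recurrent_restr X f A x) -> 0 < eta -> eta <= sg/2 ->
  (forall u v, dist X u v <= 2*eta -> dist X (f u) (f v) <= sg/2) ->
  (forall i, A (xs i)) -> (forall i, dist X (f (xs i)) (xs (S i)) <= eta) ->
  forall N, Chain X f A sg (xs N) (xs 0%nat).
Proof.
  intros Hcr He Hes Huc HA Hj N. induction N as [|N IH].
  - apply Chain_refl; auto.
  - eapply Chain_trans; [|exact IH]. eapply Chain_back; eauto.
Qed.

Fixpoint idx (k : nat -> nat) (j : nat) : nat * nat :=
  match j with
  | 0 => (0%nat, 0%nat)
  | S j' => let (n, i) := idx k j' in if Nat.ltb (S i) (k n) then (n, S i) else (S n, 0%nat)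
  end.

Lemma idx_inv k : (forall n, (1 <= k n)%nat) -> forall j, (snd (idx k j) < k (fst (idx k j)))%nat.
Proof.
  intros Hk j. induction j as [|j IH]; simpl.
  - apply Hk.
  - destruct (idx k j) as [n i]. simpl in *. destruct (Nat.ltb_spec (S i) (k n)); simpl; auto.
Qed.

Lemma idx_step k j n i : idx k j = (n, i) ->
  (idx k (S j) = (n, S i) /\ (S i < k n)%nat) \/ (idx k (S j) = (S n, 0%nat) /\ (k n <= S i)%nat).
Proof.
  intros H. simpl. rewrite H. destruct (Nat.ltb_spec (S i) (k n)); auto.
Qed.

Lemma idx_mono k j m : (fst (idx k j) <= fst (idx k (m + j)))%nat.
Proof.
  induction m as [|m IH]; simpl; [lia|].
  destruct (idx k (m + j)) as [n i]. simpl in *. destruct (Nat.ltb (S i) (k n)); simpl; lia.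
Qed.

Lemma idx_le k j : (fst (idx k j) <= j)%nat.
Proof.
  induction j as [|j IH]; simpl; [lia|].
  destruct (idx k j) as [n i]. simpl in *. destruct (Nat.ltb (S i) (k n)); simpl; lia.
Qed.

Lemma idx_block k j n : idx k j = (n, 0%nat) -> forall i, (i < k n)%nat -> idx k (i + j) = (n, i).
Proof.
  intros H i. induction i as [|i IH]; intros Hi; simpl; auto.
  rewrite IH by lia. destruct (Nat.ltb_spec (S i) (k n)); auto. lia.
Qed.

Lemma idx_reach k : (forall n, (1 <= k n)%nat) -> forall n, exists j, idx k j = (n, 0%nat).
Proof.
  intros Hk n. induction n as [|n [j Hj]].
  - exists 0%nat. reflexivity.
  - exists (S ((k n - 1) + j)). simpl. rewrite (idx_block k j n Hj) by (specialize (Hk n); lia).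
    destruct (Nat.ltb_spec (S (k n - 1)) (k n)); auto. lia.
Qed.

Theorem lemma2p1 (X : MetricSpace) (f : X -> X) (A : X -> Prop) :
  compact_space X ->
  continuous_map X f ->
  compact_set X A ->
  (forall x, A x -> A (f x)) ->
  (forall x, chain_recurrent_restr X f A x <-> A x) ->
  limit_shadowing_around X f A ->
  shadowing_around X f A.
Proof.
  intros HC Hf HAc Hinv Hcr0 Hls.
  assert (Hcr : forall x, A x -> chain_recurrent_restr X f A x) by (intros; apply Hcr0; auto).
  apply NNPP; intro Hns.
  assert (Heps : exists eps, 0 < eps /\ forall delta, 0 < delta -> exists xs,
     pseudo_orbit X f delta xs /\ contained_in X A xs /\
     forall x, exists i, eps < dist X (xs i) (Nat.iter i f x)).
  { apply NNPP; intro H1. apply Hns. intros eps He. apply NNPP; intro H2. apply H1.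
    exists eps. split; auto. intros delta Hd. apply NNPP; intro H3. apply H2.
    exists delta. split; auto. intros xs Hpo Hc. apply NNPP; intro H4. apply H3.
    exists xs. repeat split; auto. intro x. apply NNPP; intro H5. apply H4.
    exists x. intro i. apply Rnot_lt_le. intro H6. apply H5. exists i. auto. }
  destruct Heps as [eps [Heps Hbad]].
  set (sig := fun n : nat => / (INR n + 1)).
  assert (Hsig : forall n, 0 < sig n).
  { intro n; unfold sig; apply Rinv_0_lt_compat; pose proof (pos_INR n); lra. }
  assert (Hsigm : forall n m, (n <= m)%nat -> sig m <= sig n).
  { intros n m H; unfold sig; apply Rinv_le_contravar; [pose proof (pos_INR n); lra|].
    apply le_INR in H; lra. }
  assert (Huc : forall sg, 0 < sg -> exists eta, 0 < eta /\ eta <= sg/2 /\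
     forall u v, dist X u v <= 2*eta -> dist X (f u) (f v) <= sg/2).
  { intros sg Hsg. destruct (unif_cont X f HC Hf (sg/2)) as [d [Hd Hud]]; [lra|].
    exists (Rmin (sg/2) (d/3)). split; [apply Rmin_glb_lt; lra|]. split; [apply Rmin_l|].
    intros u v Huv. pose proof (Rmin_r (sg/2) (d/3)). left. apply Hud. lra. }
  assert (Hper : forall n, exists q : (nat -> X) * nat,
     (forall i, A (fst q i)) /\ (forall i, dist X (f (fst q i)) (fst q (S i)) <= sig n / 2) /\
     (forall x, exists i, (i <= snd q)%nat /\ eps < dist X (fst q i) (Nat.iter i f x)) /\
     Chain X f A (sig n) (fst q (S (snd q))) (fst q 0%nat)).
  { intro n. destruct (Huc (sig n) (Hsig n)) as [eta [He [Hes Hu]]].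
    destruct (Hbad eta He) as [xs [Hpo [Hc Hb]]].
    destruct (finite_bad X f xs eps HC Hf Hb) as [N HN].
    exists (xs, N). simpl. split; [exact Hc|]. split.
    - intro i. eapply Rle_trans; [apply Hpo| exact Hes].
    - split; [exact HN|]. eapply Chain_rev; eauto. }
  destruct (my_choice _ Hper) as [g Hg].
  set (a := fun n => fst (g n) 0%nat).
  destruct (cluster X A a HAc) as [p [Ap Hp]].
  { intro n. unfold a. destruct (Hg n) as [H _]. apply H. }
  assert (Hm : forall n, exists m, (n <= m)%nat /\ dist X p (a m) < sig n / 2).
  { intro n. destruct (Hp (sig n / 2) ltac:(pose proof (Hsig n); lra) n) as [m Hm].
    exists m; exact Hm. }
  destruct (my_choice _ Hm) as [mm Hmm].
  set (xs' := fun n => fst (g (mm n))). set (N' := fun n => snd (g (mm n))).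
  assert (Hblk : forall n, exists kc : nat * (nat -> X),
     ChainF X f A (sig n) (fst kc) (snd kc) (xs' n 0%nat) (xs' (S n) 0%nat) /\
     (N' n < fst kc)%nat /\ forall i, (i <= N' n)%nat -> snd kc i = xs' n i).
  { intro n. destruct (Hg (mm n)) as [HA [Hj [_ Hch]]].
    destruct (Hmm n) as [Hmn Hdn]. destruct (Hmm (S n)) as [Hmn1 Hdn1].
    pose proof (Hsigm n (mm n) Hmn) as Hs1. pose proof (Hsigm n (S n) ltac:(lia)) as Hs2.
    pose proof (Hsig n) as Hs0.
    assert (HA' : forall i, A (xs' n i)) by exact HA.
    assert (Hj' : forall i, dist X (f (xs' n i)) (xs' n (S i)) <= sig n / 2).
    { intro i. eapply Rle_trans; [apply Hj|]. lra. }
    assert (Hch' : Chain X f A (sig n) (xs' n (S (N' n))) (xs' n 0%nat)).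
    { eapply Chain_mono; [exact Hs1| exact Hch]. }
    assert (Hseg : ChainF X f A (sig n) (S (N' n)) (xs' n) (xs' n 0%nat) (xs' n (S (N' n)))).
    { repeat split; auto. intros i _. pose proof (Hj' i). lra. }
    assert (Hc1 : Chain X f A (sig n) (xs' n 0%nat) p).
    { apply Chain_near; auto. rewrite dist_sym. change (xs' n 0%nat) with (a (mm n)). lra. }
    assert (Hc2 : Chain X f A (sig n) p (xs' (S n) 0%nat)).
    { apply Chain_near; auto. apply (proj1 (Hg (mm (S n)))).
      change (xs' (S n) 0%nat) with (a (mm (S n))). lra. }
    destruct (Chain_trans _ _ _ _ _ _ _ (Chain_trans _ _ _ _ _ _ _ Hch' Hc1) Hc2) as [k2 [c2 H2]].
    exists (S (N' n) + k2, cat (S (N' n)) (xs' n) c2)%nat. split.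
    - exact (ChainF_cat _ _ _ _ _ _ _ _ _ _ _ Hseg H2).
    - simpl. split; [lia|]. intros i Hi. unfold cat. destruct (Nat.leb_spec i (S (N' n))); [reflexivity|lia]. }
  destruct (my_choice _ Hblk) as [kc Hkc].
  set (kk := fun n => fst (kc n)). set (cc := fun n => snd (kc n)).
  assert (Hk1 : forall n, (1 <= kk n)%nat). { intro n. destruct (Hkc n) as [_ [H _]]. unfold kk. lia. }
  set (z := fun j => cc (fst (idx kk j)) (snd (idx kk j))).
  assert (Hzj : forall j, dist X (f (z j)) (z (S j)) <= sig (fst (idx kk j))).
  { intro j. pose proof (idx_inv kk Hk1 j) as Hinvj. unfold z.
    destruct (idx kk j) as [n i] eqn:E. cbn [fst snd] in Hinvj |- *.
    destruct (Hkc n) as [[H0 [H1 [H2 H3]]] _].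
    destruct (idx_step _ _ _ _ E) as [[E2 Hl]|[E2 Hl]]; rewrite E2; cbn [fst snd].
    - apply H3. exact Hinvj.
    - destruct (Hkc (S n)) as [[G0 _] _]. fold (cc (S n)) in G0. rewrite G0.
      fold (kk n) (cc n) in H1. rewrite <- H1. replace (kk n) with (S i) by lia.
      apply H3. exact Hinvj. }
  assert (HzA : forall j, A (z j)).
  { intro j. pose proof (idx_inv kk Hk1 j) as Hinvj. unfold z.
    destruct (idx kk j) as [n i]. simpl in *.
    destruct (Hkc n) as [[H0 [H1 [H2 H3]]] _]. apply H2. unfold kk in Hinvj. lia. }
  destruct (Hls z) as [y Hy].
  - unfold limit_pseudo_orbit, Un_cv. intros e He.
    destruct (archimed_cor1 e He) as [M [HM HM0]].
    destruct (idx_reach kk Hk1 M) as [jM HjM]. exists jM. intros j Hj.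
    unfold Rdist. rewrite Rminus_0_r, Rabs_pos_eq by apply dist_nonneg.
    eapply Rle_lt_trans; [apply Hzj|].
    pose proof (idx_mono kk jM (j - jM)) as Hmo. replace (j - jM + jM)%nat with j in Hmo by lia.
    rewrite HjM in Hmo. simpl in Hmo.
    eapply Rle_lt_trans; [apply (Hsigm _ _ Hmo)|]. unfold sig.
    eapply Rlt_trans; [|exact HM]. apply Rinv_lt_contravar.
    + apply lt_0_INR in HM0. nra.
    + lra.
  - intro j. apply HzA.
  - destruct (Hy eps Heps) as [J HJ].
    destruct (idx_reach kk Hk1 J) as [jn Hjn].
    pose proof (idx_le kk jn) as Hle. rewrite Hjn in Hle. simpl in Hle.
    destruct (Hg (mm J)) as [_ [_ [Hb _]]].
    destruct (Hb (Nat.iter jn f y)) as [i [Hi Hei]].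
    destruct (Hkc J) as [_ [HNk Hag]]. unfold N' in HNk.
    pose proof (HJ (i + jn)%nat ltac:(lia)) as HH. unfold Rdist in HH.
    rewrite Rminus_0_r, Rabs_pos_eq in HH by apply dist_nonneg.
    unfold z in HH. rewrite (idx_block kk jn J Hjn i) in HH by (unfold kk; lia).
    simpl in HH. rewrite Nat.iter_add in HH. unfold cc in HH. rewrite (Hag i Hi) in HH.
    unfold xs' in HH. lra.
Qed.
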